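(* In the BBoxER framework described in the context, let the seed $\omega$ of the algorithm $a$ be a random variable independent of the dataset draw $\omega_D$, let $b\in\mathbb N$ be a budget and $\epsilon>0$, and assume there is $\delta_{1,\epsilon}$ with $P_{\omega_D}(|\widehat L(x)-L(x)|>\epsilon)\le\delta_{1,\epsilon}$ for every parameter $x$. Then $$P_{\omega,\omega_D}\big(|\widehat L(\widehat x)-L(\widehat x)|>\epsilon\big)\le \Big(\sup_{\omega\ \text{constant}} N(\omega,a,b)\Big)\cdot\delta_{1,\epsilon},$$ where $\widehat x$ depends on both $\omega$ and $\omega_D$ and the supremum is over all fixed values of the seed.
   Context: BBoxER framework. Fix an initial model $m_0$ and a map $(m_0,x)\mapsto \mathrm{modified}(m_0,x)$ sending a parameter $x$ to a model. Let $\mathcal D$ be the class of datasets $D$ of size $s$ drawn from a distribution $F$; $\omega_D$ denotes the randomness of the draw of $D$. A black-box optimization algorithm $a$, deterministic given its seed $\omega$, is run with budget $b$ on $D$: it is initialized from $\omega$; at each iteration $i=1,\dots,b$ it proposes $x_i$ and model $m_i=\mathrm{modified}(m_0,x_i)$, declares a finite number $k_i\ge1$ of possible comparison outcomes, then receives $\mathrm{choice}_i\in\{1,\dots,k_i\}$ computed by comparing $m_1,\dots,m_i$ on $D$; finally it recommends $\widehat x$. The algorithm accesses $D$ only through the $\mathrm{choice}_i$, so $\widehat x$ is a deterministic function of $(\omega,a,b,\mathrm{choice}_1,\dots,\mathrm{choice}_b)$. The internal state is $S(\omega,D,a,b)=(\omega,\mathrm{choice}_1,\dots,\mathrm{choice}_b)$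 and $N(\omega,a,b)=\operatorname{Card}\{S(\omega,D,a,b):D\in\mathcal D\}$. $L(x)$ is the generalization error under $F$ of $\mathrm{modified}(m_0,x)$, $\widehat L(x)$ its empirical error on $D$. *)

(* Defs.v *)
From HB Require Import structures.
From mathcomp Require Import all_boot all_order all_algebra.
From mathcomp Require Import all_classical all_reals all_analysis.
Set Implicit Arguments. Unset Strict Implicit. Unset Printing Implicit Defensive.
Import Order.TTheory GRing.Theory Num.Theory.
Local Open Scope classical_set_scope.
Local Open Scope ring_scope.

(* Comparison outcomes are natural numbers;
   the list of previously received outcomes determines everything the
   algorithm knows about the data. *)
Record bbox_algo (Seed Param : Type) := BBoxAlgo {
  propose   : Seed -> seq nat -> Param; (* x_i, from seed and choice_1..choice_{i-1} *)
  noutcomes : Seed -> seq nat -> nat;   (* k_i, declared number of outcomes *)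
  recommend : Seed -> seq nat -> Param  (* \hat x, from seed and choice_1..choice_b *)
}.

Definition algo_wf (Seed Param : Type) (a : bbox_algo Seed Param) :=
  forall w cs, (1 <= noutcomes a w cs)%N.

Definition compare_wf (Model Data : Type) (compare : seq Model -> nat -> Data -> nat) :=
  forall ms k D, (1 <= k)%N -> (1 <= compare ms k D <= k)%N.

Section Run.
Variables (Seed Param Model Data : Type).
Variables (m0 : Model) (modified : Model -> Param -> Model).
Variable (compare : seq Model -> nat -> Data -> nat).
Variable (a : bbox_algo Seed Param).

(* run b w D = ([m_1;..;m_b], [choice_1;..;choice_b]) *)
Fixpoint run (b : nat) (w : Seed) (D : Data) : seq Model * seq nat :=
  match b with
  | 0 => ([::], [::])
  | b'.+1 =>
      let: (ms, cs) := run b' w D in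
      let x := propose a w cs in
      let ms' := rcons ms (modified m0 x) in
      (ms', rcons cs (compare ms' (noutcomes a w cs) D))
  end.

Definition choices (b : nat) (w : Seed) (D : Data) : seq nat := (run b w D).2.

Definition xhat (b : nat) (w : Seed) (D : Data) : Param :=
  recommend a w (choices b w D).

Definition state (b : nat) (w : Seed) (D : Data) : Seed * seq nat :=
  (w, choices b w D).

End Run.

(* N(w, a, b) = Card { S(w, D, a, b) : D in DD }, as an extended real
   (+oo if infinite). *)
Definition Nstates (R : realType) (Seed : choiceType) (Param Model Data : Type)
  (m0 : Model) (modified : Model -> Param -> Model)
  (compare : seq Model -> nat -> Data -> nat) (a : bbox_algo Seed Param)
  (DD : set Data) (b : nat) (w : Seed) : \bar R :=
  counting [set state m0 modified compare a b w D | D in DD].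

(* Main.v *)
Require Import Defs.
From HB Require Import structures.
From mathcomp Require Import all_boot all_order all_algebra.
From mathcomp Require Import all_classical all_reals all_analysis.
From mathcomp Require Import finmap.
Import Order.TTheory GRing.Theory Num.Theory.
Local Open Scope classical_set_scope.
Local Open Scope ring_scope.

Theorem theorem3
  (R : realType)
  (d1 d2 : measure_display) (Tw : measurableType d1) (TD : measurableType d2)
  (Pw : probability Tw R) (PD : probability TD R)
  (Param Model Data : Type) (m0 : Model) (modified : Model -> Param -> Model)
  (DD : set Data) (draw : TD -> Data) (draw_in : forall wD, DD (draw wD))
  (compare : seq Model -> nat -> Data -> nat) (compare_ok : compare_wf compare)
  (a : bbox_algo Tw Param) (a_ok : algo_wf a)
  (L : Param -> R) (Lhat : Param -> Data -> R)
  (b : nat) (eps delta1 : R) (eps_gt0 : 0 < eps)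
  (bad_meas : forall x : Param,
      measurable [set wD : TD | (eps < `|Lhat x (draw wD) - L x|)%R])
  (hyp : forall x : Param,
      (PD [set wD : TD | (eps < `|Lhat x (draw wD) - L x|)%R] <= delta1%:E)%E)
  (joint_meas : measurable [set p : Tw * TD |
      (eps < `|Lhat (xhat m0 modified compare a b p.1 (draw p.2)) (draw p.2)
              - L (xhat m0 modified compare a b p.1 (draw p.2))|)%R]) :
  ((Pw \x PD)%E [set p : Tw * TD |
      (eps < `|Lhat (xhat m0 modified compare a b p.1 (draw p.2)) (draw p.2)
              - L (xhat m0 modified compare a b p.1 (draw p.2))|)%R]
   <= ereal_sup (range (Nstates R m0 modified compare a DD b)) * delta1%:E)%E.
Proof.
set E := [set p : Tw * TD | _].
set N := Nstates R m0 modified compare a DD b.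
have d1ge0 : 0 <= delta1.
  have := hyp (recommend a point [::]).
  by move/(le_trans (measure_ge0 _ _)); rewrite lee_fin.
pose bad x := [set wD : TD | (eps < `|Lhat x (draw wD) - L x|)%R].
pose ch w wD := choices m0 modified compare a b w (draw wD).
have secE w : xsection E w `<=` [set wD | bad (recommend a w (ch w wD)) wD].
  by move=> wD; rewrite /xsection /= in_setE.
have Nge0 w : (0 <= N w)%E.
  by rewrite /N /Nstates /counting; case: ifPn; rewrite ?lee_fin ?leey.
have key w : (PD (xsection E w) <= N w * delta1%:E)%E.
  have mS : measurable (xsection E w) by exact: measurable_xsection.
  rewrite /N /Nstates /counting; case: ifPn => [/asboolP finS | _]; last first.
    have [d10|d1n0] := eqVneq delta1 0; last first.
      by rewrite gt0_mulye ?leey // lte_fin lt_neqAle eq_sym d1n0.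
    rewrite d10 mule0.
    pose F n := bad (recommend a w (odflt [::] (@pickle_inv (seq nat) n))).
    apply: (le_trans (measure_sigma_subadditive PD (F:=F) _ mS _)).
    - by move=> n; exact: bad_meas.
    - move=> wD /secE /= Hb; exists (choice.pickle (ch w wD)) => //.
      by rewrite /F pickleK_inv.
    rewrite eseries0 // => n _ _; apply/eqP; rewrite -measure_le0.
    by move: (hyp (recommend a w (odflt [::] (pickle_inv n)))); rewrite d10.
  set S := [set _ | _ in DD] in finS *.
  set l := enum_fset (fset_set S).
  pose st0 := (w, [::] : seq nat).
  pose F k := bad (recommend a w (nth st0 l k).2).
  apply: (le_trans (content_subadditive PD (F:=F) (n:=size l) _ mS _)).
  - by move=> k _; exact: bad_meas.
  - move=> wD /secE Hb; rewrite -bigcup_mkord.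
    have Sin : (state m0 modified compare a b w (draw wD)) \in l.
      change (state m0 modified compare a b w (draw wD) \in fset_set S).
      rewrite in_fset_set // in_setE; exists (draw wD) => //.
    exists (index (state m0 modified compare a b w (draw wD)) l).
      by rewrite /= index_mem.
    by rewrite /F nth_index.
  apply: (@le_trans _ _ (\sum_(k < size l) delta1%:E)%E).
    by apply: lee_sum => k _; exact: hyp.
  rewrite sumEFin sumr_const card_ord card_fset_sum1 sum1_size -EFinM mulr_natl.
  by [].
have supge w : (N w <= ereal_sup (range N))%E by apply: ereal_sup_ubound; exists w.
have sup_ge0 : (0 <= ereal_sup (range N))%E := le_trans (Nge0 point) (supge point).
rewrite /product_measure1.
apply: (@le_trans _ _ (\int[Pw]_(w in setT) (cst (ereal_sup (range N) * delta1%:E)) w)%E).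
  apply: ge0_le_integral => //.
  - exact: measurable_fun_xsection.
  - move=> w _ /=; apply: (le_trans (key w)).
    by apply: lee_wpmul2r; rewrite ?lee_fin.
rewrite integral_cst //.
set m := (X in (_ * X <= _)%E).
have -> : m = 1%E.
  rewrite /m. have h := probability_setT Pw. exact h.
by rewrite mule1.
Qed.
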